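(* Fix $0<\alpha<1$, $\lambda>1$, $0<r_0<1$ and $0<\mu<1$. There is a constant $C_3>0$ such that the following holds. Let $s(t)=(s_1(t),s_2(t))$ and $\tilde s(t)=(\tilde s_1(t),\tilde s_2(t))$ be solutions of $$\dot s_1=s_1\Bigl(\tfrac{s_1^2+s_2^2}{r_0}\Bigr)^{\alpha}\log\lambda,\qquad \dot s_2=-s_2\Bigl(\tfrac{s_1^2+s_2^2}{r_0}\Bigr)^{\alpha}\log\lambda$$ where $T>0$ is such that $s(t)$ lies in $D_{r_0/2}=\{s_1^2+s_2^2\le r_0^2/4\}$ for all $t\in[0,T]$ while the trajectory is outside $D_{r_0/2}$ at times $-1$ and $T+1$; let $T_1=T/2$ and $\Delta s_j(t)=\tilde s_j(t)-s_j(t)$. Assume $s_1(t)\neq0\neq s_2(t)$, that $\Delta s_2(t)>0$ and $|\Delta s_1(t)|\le\mu\,\Delta s_2(t)$ for $t\in[0,T]$, and that $\bigl|\frac{\Delta s_2(0)}{s_2(0)}\bigr|<\frac{1-\mu}{72}$. Then for all $T_1<t<T$, $$\Delta s_2(t)<C_3\,\Delta s_2(T_1).$$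
   Context: The system is the slow-down vector field in the region where the slow-down function equals $\psi(u)=(u/r_0)^\alpha$; $\lambda$ is the largest eigenvalue of the toral automorphism being slowed down. The constant $C_3$ is uniform over all such pairs of solutions. *)

(* Defs.v *)
From HB Require Import structures.
From mathcomp Require Import all_boot all_order all_algebra.
From mathcomp Require Import all_classical all_reals all_analysis.
Set Implicit Arguments. Unset Strict Implicit. Unset Printing Implicit Defensive.
Import Order.TTheory GRing.Theory Num.Theory.
Import numFieldNormedType.Exports.
Local Open Scope ring_scope.

Definition slow_factor (R : realType) (alpha r0 lam x y : R) : R :=
  ((x ^+ 2 + y ^+ 2) / r0) `^ alpha * ln lam.

Definition slow_solution_on (R : realType) (alpha r0 lam : R)
    (s1 s2 : R -> R) (P : R -> Prop) : Prop :=
  forall t : R, P t ->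
    is_derive t 1 s1 (s1 t * slow_factor alpha r0 lam (s1 t) (s2 t)) /\
    is_derive t 1 s2 (- (s2 t * slow_factor alpha r0 lam (s1 t) (s2 t))).

(* Main.v *)
Require Import Defs.
From HB Require Import structures.
From mathcomp Require Import all_boot all_order all_algebra.
From mathcomp Require Import all_classical all_reals all_analysis.
From mathcomp Require Import ring lra.
Import Order.TTheory GRing.Theory Num.Theory.
Import numFieldNormedType.Exports.
Local Open Scope ring_scope.

Lemma poly_ineq (R : realType) (mu a b x z : R) :
  0 <= mu -> mu <= 1 -> 0 < a -> a < b -> `|x| <= `|z| + mu * (b - a) ->
  a * (x ^+ 2 + a ^+ 2) <= b * (z ^+ 2 + b ^+ 2).
Proof.
move=> m0 m1 a0 ab hx.
have hx0 : 0 <= `|x| by [].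
have hz : z ^+ 2 = `|z| ^+ 2 by rewrite (real_normK (num_real z)).
have hxx : x ^+ 2 = `|x| ^+ 2 by rewrite (real_normK (num_real x)).
rewrite hz hxx; move: hx hx0 (normr_ge0 z); move: `|x| `|z| => v w hx hx0 w0.
have hmb : 0 <= mu * (b - a) by apply: mulr_ge0 => //; lra.
have hx2 : v ^+ 2 <= (w + mu * (b - a)) ^+ 2 by nra.
have h1 : a * v ^+ 2 <= a * (w + mu * (b - a)) ^+ 2 by rewrite ler_pM2l.
suff : a * (w + mu * (b - a)) ^+ 2 + a * a ^+ 2 <= b * (w ^+ 2 + b ^+ 2) by lra.
have e1 : 0 <= (w - a) ^+ 2 by apply: sqr_ge0.
have e2 : 0 <= (1 - mu) * a * w by apply: mulr_ge0 => //; apply: mulr_ge0; lra.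
have e5 : 0 <= (1 - mu * mu) * a * (b - a).
  apply: mulr_ge0; last lra; apply: mulr_ge0; nra.
have e4 : 0 <= (b - a) * ((w - a) ^+ 2 + 2 * ((1 - mu) * a * w) + b ^+ 2 + a * b - a * mu * mu * (b - a)).
  apply: mulr_ge0; first lra.
  nra.
have e6 : b * (w ^+ 2 + b ^+ 2) - (a * (w + mu * (b - a)) ^+ 2 + a * a ^+ 2) =
  (b - a) * ((w - a) ^+ 2 + 2 * ((1 - mu) * a * w) + b ^+ 2 + a * b - a * mu * mu * (b - a)) by ring.
lra.
Qed.

Lemma pow_step (R : realType) (al a b p q : R) :
  0 <= al -> al <= 1 -> 0 < a -> a <= b -> 0 <= p -> 0 <= q -> a * q <= b * p ->
  a * q `^ al <= b * p `^ al.
Proof.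
move=> al0 al1 a0 ab p0 q0 h.
have pa0 := powR_ge0 p al.
case: (leP q p) => qp.
  have : q `^ al <= p `^ al by apply: ge0_ler_powR.
  nra.
have pp : 0 < p.
  rewrite lt_neqAle p0 andbT; apply/eqP => e; rewrite -e in h qp; nra.
have e : q = p * (q / p) by field; rewrite gt_eqF.
have hq1 : 1 <= q / p by rewrite ler_pdivlMr // mul1r ltW.
have hr : (q / p) `^ al <= q / p by apply: ler1_powR.
rewrite e powRM //; last by apply: divr_ge0.
have h2 : a * (q / p) <= b.
  by rewrite mulrA ler_pdivrMr //.
have k1 : 0 <= (q / p - (q / p) `^ al) * (a * p `^ al).
  by apply: mulr_ge0; [lra | apply: mulr_ge0 => //; lra].
have k2 : 0 <= (b - a * (q / p)) * p `^ al by apply: mulr_ge0 => //; lra.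
nra.
Qed.

Lemma key (R : realType) (alpha r0 lam mu x a z b : R) :
  0 <= alpha -> alpha <= 1 -> 1 < lam -> 0 < r0 -> 0 <= mu -> mu <= 1 ->
  a < b -> `|z - x| <= mu * (b - a) ->
  a * slow_factor alpha r0 lam x a <= b * slow_factor alpha r0 lam z b.
Proof.
move=> al0 al1 l1 r00 m0 m1 ab hd.
rewrite /slow_factor.
have L0 : 0 <= ln lam by apply: ln_ge0; lra.
suff : a * ((x ^+ 2 + a ^+ 2) / r0) `^ alpha <= b * ((z ^+ 2 + b ^+ 2) / r0) `^ alpha.
  move=> h; rewrite !mulrA; apply: ler_wpM2r => //.
have Q0 : 0 <= (x ^+ 2 + a ^+ 2) / r0 by apply: divr_ge0; [apply: addr_ge0; apply: sqr_ge0 | lra].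
have P0 : 0 <= (z ^+ 2 + b ^+ 2) / r0 by apply: divr_ge0; [apply: addr_ge0; apply: sqr_ge0 | lra].
have hq := powR_ge0 ((x ^+ 2 + a ^+ 2) / r0) alpha.
have hp := powR_ge0 ((z ^+ 2 + b ^+ 2) / r0) alpha.
have hxz : `|x| <= `|z| + mu * (b - a).
  have : `|x| <= `|z| + `|x - z|.
    have e : z + (x - z) = x by ring.
    by have := ler_normD z (x - z); rewrite e.
  by rewrite distrC; lra.
have hzx : `|z| <= `|x| + mu * (b - a).
  have : `|z| <= `|x| + `|z - x|.
    have e : x + (z - x) = z by ring.
    by have := ler_normD x (z - x); rewrite e.
  lra.
have r0i : 0 < r0^-1 by rewrite invr_gt0.
case: (ltP 0 a) => a0.
  have hpoly := @poly_ineq R mu a b x z m0 m1 a0 ab hxz.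
  apply: pow_step => //; first lra.
  rewrite !mulrA; apply: ler_wpM2r => //; lra.
case: (ltP b 0) => b0.
  have nb0 : 0 < - b by lra.
  have nab : - b < - a by lra.
  have hpoly := @poly_ineq R mu (- b) (- a) z x m0 m1 nb0 nab.
  rewrite !sqrrN in hpoly.
  have : - b * ((z ^+ 2 + b ^+ 2) / r0) `^ alpha <= - a * ((x ^+ 2 + a ^+ 2) / r0) `^ alpha.
    apply: pow_step => //; first lra.
    rewrite !mulrA; apply: ler_wpM2r; first lra.
    have e : - a - - b = b - a by ring.
    by apply: hpoly; rewrite e.
  lra.
nra.
Qed.

Theorem lemma6p5 (R : realType) (alpha lam r0 mu : R) :
  0 < alpha -> alpha < 1 -> 1 < lam -> 0 < r0 -> r0 < 1 -> 0 < mu -> mu < 1 ->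
  exists C3 : R, 0 < C3 /\
  forall (T : R) (s1 s2 st1 st2 : R -> R),
    0 < T ->
    slow_solution_on alpha r0 lam s1 s2 (fun t => -1 <= t <= T + 1) ->
    slow_solution_on alpha r0 lam st1 st2 (fun t => 0 <= t <= T) ->
    (forall t, 0 <= t <= T -> s1 t ^+ 2 + s2 t ^+ 2 <= r0 ^+ 2 / 4) ->
    r0 ^+ 2 / 4 < s1 (-1) ^+ 2 + s2 (-1) ^+ 2 ->
    r0 ^+ 2 / 4 < s1 (T + 1) ^+ 2 + s2 (T + 1) ^+ 2 ->
    (forall t, 0 <= t <= T -> s1 t != 0 /\ s2 t != 0) ->
    (forall t, 0 <= t <= T ->
       0 < st2 t - s2 t /\ `|st1 t - s1 t| <= mu * (st2 t - s2 t)) ->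
    `|(st2 0 - s2 0) / s2 0| < (1 - mu) / 72 ->
    forall t, T / 2 < t < T ->
      st2 t - s2 t < C3 * (st2 (T / 2) - s2 (T / 2)).
Proof.
move=> a0 a1 l1 r00 r01 m0 m1.
exists 2; split; first lra.
move=> T s1 s2 st1 st2 T0 hs hst _ _ _ _ hD _ t /andP[tl tr].
pose g : R -> R := st2 - s2.
have hder : forall x, x \in `]0, T[%R ->
    is_derive x 1 g (- (st2 x * slow_factor alpha r0 lam (st1 x) (st2 x))
                     - - (s2 x * slow_factor alpha r0 lam (s1 x) (s2 x))).
  move=> x; rewrite in_itv /= => /andP[x0 xT].
  have [_ d2] := hs x (ltac:(apply/andP; split; lra)).
  have [_ d2'] := hst x (ltac:(apply/andP; split; lra)).
  exact: is_deriveB.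
have dg : forall x, x \in `]0, T[%R -> derivable g x 1.
  by move=> x /hder h; apply: ex_derive.
have dle : forall x, x \in `]0, T[%R -> derive1 g x <= 0.
  move=> x xi; have h := hder x xi.
  rewrite derive1E (@derive_val _ _ _ _ _ _ _ h).
  move: xi; rewrite in_itv /= => /andP[x0 xT].
  have [hp hm] := hD x (ltac:(apply/andP; split; lra)).
  have := @key R alpha r0 lam mu (s1 x) (s2 x) (st1 x) (st2 x)
     (ltac:(lra)) (ltac:(lra)) l1 r00 (ltac:(lra)) (ltac:(lra)) (ltac:(lra)) hm.
  lra.
have cg : {in `]0, T[%classic, continuous g}.
  move=> x; rewrite inE /= => /dg h; apply: differentiable_continuous; exact/derivable1_diffP.
have mono := ler0_derive1_le_oo dg dle cg.
have hle : g t <= g (T / 2).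
  apply: mono; rewrite ?in_itv /=; try (apply/andP; split); lra.
have [hp _] := hD (T / 2) (ltac:(apply/andP; split; lra)).
have e1 : g t = st2 t - s2 t by [].
have e2 : g (T / 2) = st2 (T / 2) - s2 (T / 2) by [].
rewrite e1 e2 in hle.
lra.
Qed.
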